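(* Let $A=[a_1,\dots,a_N]$ and $B=[b_1,\dots,b_N]$ be $N\times N$ complex matrices, $\theta$ a real parameter, and $m_k(\theta)=(1-\theta)a_k+\theta b_k$ the $k$-th column of $(1-\theta)A+\theta B$. Define recursively $z_1=v_1=m_1$ and, for $k\ge2$, \[ v_k=m_k-\sum_{j=1}^{k-1}\frac{\langle z_j,m_k\rangle}{\|z_j\|^2}\,z_j,\qquad z_k=\Big(\prod_{j=1}^{k-1}\|z_j\|^2\Big)\Big\{m_k-\sum_{j=1}^{k-1}\frac{\langle z_j,m_k\rangle z_j}{\|z_j\|^2}\Big\}. \] Then for each $k\in\{1,\dots,N\}$, $z_k$ equals $v_k$ multiplied by a polynomial in $\theta$ of degree at most $D_k=3^{k-1}-1$ (its denominator), and every entry of $z_k(\theta)$ is a polynomial in $\theta$ of degree at most $D_k+1=3^{k-1}$.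
   Context: $\langle x,y\rangle=\sum_i\overline{x_i}y_i$ is the standard inner product on $\mathbb{C}^N$ and $\|x\|^2=\langle x,x\rangle$; for real $\theta$ these are polynomials in $\theta$ with complex coefficients. *)

(* Defs.v *)
From HB Require Import structures.
From mathcomp Require Import all_boot all_order all_algebra.
From mathcomp Require Import reals.
From mathcomp.real_closed Require Import complex.
Set Implicit Arguments. Unset Strict Implicit. Unset Printing Implicit Defensive.
Import Order.TTheory GRing.Theory Num.Theory.
Local Open Scope ring_scope.
Local Open Scope complex_scope.

Definition inner (R : realType) (N : nat) (x y : 'cV[R[i]]_N) : R[i] :=
  \sum_(l < N) (x l 0)^* * y l 0.

Definition norm2 (R : realType) (N : nat) (x : 'cV[R[i]]_N) : R[i] := inner x x.

Definition Mth (R : realType) (N : nat) (A B : 'M[R[i]]_N) (th : R) : 'M[R[i]]_N :=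
  (1 - th%:C) *: A + th%:C *: B.

(* the j-th column (0-based index j : nat) of a matrix; 0 if j >= N *)
Definition colnat (R : realType) (N : nat) (M : 'M[R[i]]_N) (j : nat) : 'cV[R[i]]_N :=
  \col_l (oapp (M l) 0 (insub j : option 'I_N)).

Definition mvec (R : realType) (N : nat) (A B : 'M[R[i]]_N) (th : R) (k : nat) :=
  colnat (Mth A B th) k.

Definition vnew (R : realType) (N : nat) (zs : seq 'cV[R[i]]_N) (mk : 'cV[R[i]]_N) :=
  mk - \sum_(z <- zs) (inner z mk / norm2 z) *: z.

Definition znew (R : realType) (N : nat) (zs : seq 'cV[R[i]]_N) (mk : 'cV[R[i]]_N) :=
  (\prod_(z <- zs) norm2 z) *: vnew zs mk.

(* zlist n = [:: z_0; ...; z_(n-1)] (0-based indices, z_0 = m_0) *)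
Fixpoint zlist (R : realType) (N : nat) (A B : 'M[R[i]]_N) (th : R) (n : nat)
  : seq 'cV[R[i]]_N :=
  match n with
  | 0 => [::]
  | n'.+1 => rcons (zlist A B th n') (znew (zlist A B th n') (mvec A B th n'))
  end.

Definition zvec (R : realType) (N : nat) (A B : 'M[R[i]]_N) (th : R) (k : nat) :=
  znew (zlist A B th k) (mvec A B th k).

Definition vvec (R : realType) (N : nat) (A B : 'M[R[i]]_N) (th : R) (k : nat) :=
  vnew (zlist A B th k) (mvec A B th k).

(* Main.v *)
Require Import Defs.
From HB Require Import structures.
From mathcomp Require Import all_boot all_order all_algebra.
From mathcomp Require Import reals.
From mathcomp.real_closed Require Import complex.
From mathcomp Require Import zify ring.
Import Order.TTheory GRing.Theory Num.Theory.
Local Open Scope ring_scope.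
Local Open Scope complex_scope.

Section Aux.
Variable R : realType.
Variable N : nat.
Variables A B : 'M[R[i]]_N.

Local Notation C := R[i].
Local Notation PV := 'cV[{poly R[i]}]_N.

Definition dle (p : {poly C}) (d : nat) := (size p <= d.+1)%N.

Lemma dle_mon p a b : dle p a -> (a <= b)%N -> dle p b.
Proof. rewrite /dle => H1 H2; lia. Qed.

Lemma dleM p q a b : dle p a -> dle q b -> dle (p * q) (a + b)%N.
Proof.
rewrite /dle => H1 H2; have := size_polyMleq p q; lia.
Qed.

Lemma dleD p q a : dle p a -> dle q a -> dle (p + q) a.
Proof.
rewrite /dle => H1 H2; have := size_polyD p q; lia.
Qed.

Lemma dleB p q a : dle p a -> dle q a -> dle (p - q) a.
Proof.
move=> H1 H2; apply: dleD => //; by rewrite /dle size_polyN.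
Qed.

Lemma dle_sum I (r : seq I) (P : pred I) F d :
  (forall i, P i -> dle (F i) d) -> dle (\sum_(i <- r | P i) F i) d.
Proof.
move=> H; elim: r => [|x r IH]; first by rewrite big_nil /dle size_poly0.
rewrite big_cons; case: ifP => // Px; exact: dleD (H _ Px) IH.
Qed.

Lemma dle_prod I (r : seq I) (P : pred I) F G :
  (forall i, P i -> dle (F i) (G i)) ->
  dle (\prod_(i <- r | P i) F i) (\sum_(i <- r | P i) G i)%N.
Proof.
move=> H; elim: r => [|x r IH]; first by rewrite !big_nil /dle size_poly1.
rewrite !big_cons; case: ifP => // Px; exact: dleM (H _ Px) IH.
Qed.

Arguments dle_mon {p a b}.
Arguments dleM {p q a b}.
Arguments dleD {p q a}.
Arguments dleB {p q a}.

Definition ev (th : R) (P : PV) : 'cV[C]_N := \col_l (P l 0).[th%:C].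

Definition pc (p : {poly C}) := map_poly conjc p.

Lemma pcE th p : (pc p).[th%:C] = (p.[th%:C])^*.
Proof. by rewrite -{1}(conjc_real th) /pc horner_map. Qed.

Lemma dle_pc p d : dle p d -> dle (pc p) d.
Proof. by rewrite /dle /pc size_map_poly. Qed.

Arguments dle_pc {p d}.

Definition pinner (P Q : PV) : {poly C} := \sum_(l < N) pc (P l 0) * Q l 0.
Definition pnorm2 (P : PV) := pinner P P.

Lemma pinnerE th P Q : (pinner P Q).[th%:C] = inner (ev th P) (ev th Q).
Proof.
rewrite /pinner /inner horner_sum; apply: eq_bigr => l _.
by rewrite hornerM pcE !mxE.
Qed.

Lemma dle_pinner (P Q : PV) a b : (forall l, dle (P l 0) a) -> (forall l, dle (Q l 0) b) ->
  dle (pinner P Q) (a + b)%N.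
Proof.
move=> HP HQ; apply: dle_sum => l _ /=. apply: dleM; [apply: dle_pc; exact: HP | exact: HQ].
Qed.

Definition Mp (n : nat) : PV :=
  \col_l (oapp (fun j => (1 - 'X) * (A l j)%:P + 'X * (B l j)%:P) 0 (insub n : option 'I_N)).

Lemma MpE th n : ev th (Mp n) = mvec A B th n.
Proof.
apply/matrixP => l c; rewrite /mvec /colnat /Mth !mxE.
case: (insub n) => [j|] /=; last by rewrite horner0.
by rewrite !mxE !hornerE.
Qed.

Lemma dle_Mp n l : dle (Mp n l 0) 1.
Proof.
rewrite mxE; case: (insub n) => [j|] /=; last by rewrite /dle size_poly0.
apply: dleD.
- apply: (@dle_mon _ (1 + 0)) => //; apply: dleM; last by rewrite /dle size_polyC; case: (_ != 0).
  apply: dleB; first by rewrite /dle size_poly1.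
  by rewrite /dle size_polyX.
- apply: (@dle_mon _ (1 + 0)) => //; apply: dleM; last by rewrite /dle size_polyC; case: (_ != 0).
  by rewrite /dle size_polyX.
Qed.

Definition pz (Zs : seq PV) (M : PV) : PV :=
  \col_l ((\prod_(j < size Zs) pnorm2 Zs`_j) * M l 0
     - \sum_(j < size Zs) (\prod_(i < size Zs | i != j) pnorm2 Zs`_i)
                 * pinner Zs`_j M * Zs`_j l 0).

Lemma norm2_eq0 (z : 'cV[C]_N) : norm2 z = 0 -> forall l, z l 0 = 0.
Proof.
move=> H l; have /eqP : (z l 0)^* * z l 0 = 0.
  apply: (psumr_eq0P (P := predT) (F := fun l => (z l 0)^* * z l 0)) => //.
  by move=> i _; rewrite mulrC; apply: mul_conjC_ge0.
by rewrite mulrC mul_conjC_eq0 => /eqP.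
Qed.

Lemma pzE th (Zs : seq PV) (M : PV) : ev th (pz Zs M) = znew (map (ev th) Zs) (ev th M).
Proof.
apply/matrixP => l c; rewrite (ord1 c) /znew /vnew !big_map.
rewrite (big_nth 0) big_mkord (big_nth 0) big_mkord.
rewrite {1}/ev /pz !mxE hornerD hornerN hornerM horner_sum horner_prod.
rewrite summxE mulrBr; congr (_ * _ - _).
  by apply: eq_bigr => j _; rewrite pinnerE.
rewrite mulr_sumr; apply: eq_bigr => j _.
rewrite !mxE !hornerM horner_prod !pinnerE [in RHS](bigD1 j) //=.
set n := norm2 (ev th Zs`_j).
have -> : \prod_(i < size Zs | i != j) (pnorm2 Zs`_i).[th%:C]
   = \prod_(i < size Zs | i != j) norm2 (ev th Zs`_i).
  by apply: eq_bigr => i _; rewrite pinnerE.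
have [n0|nn0] := eqVneq n 0.
  have := norm2_eq0 (ev th Zs`_j) n0 l; rewrite mxE => ->; by rewrite !mulr0.
by field.
Qed.

Lemma sum3 n : ((\sum_(j < n) (3 ^ j + 3 ^ j)).+1 = 3 ^ n)%N.
Proof.
elim: n => [|n IH]; first by rewrite big_ord0.
rewrite big_ord_recr /= expnS; move: IH; set S := (\sum_(i < n) _)%N; set T := (3 ^ n)%N; clearbody S T. lia.
Qed.

Lemma dle_pnorm2 (P : PV) a : (forall l, dle (P l 0) a) -> dle (pnorm2 P) (a + a)%N.
Proof. by move=> H; apply: dle_pinner. Qed.

Lemma dle_pz (Zs : seq PV) n : size Zs = n ->
  (forall j l, (j < n)%N -> dle (Zs`_j l 0) (3 ^ j)) ->
  forall l, dle (pz Zs (Mp n) l 0) (3 ^ n).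
Proof.
move=> Hs H l; rewrite mxE.
have HP : dle (\prod_(j < size Zs) pnorm2 Zs`_j) (\sum_(j < size Zs) (3 ^ j + 3 ^ j))%N.
  apply: dle_prod => j _; apply: dle_pnorm2 => l'; apply: H; rewrite -Hs; exact: ltn_ord.
apply: dleB.
  rewrite -Hs; apply: dle_mon (dleM HP (dle_Mp (size Zs) l)) _; rewrite -(sum3 (size Zs)); lia.
apply: dle_sum => j _.
have Hj := H j; rewrite -Hs in Hj; have {}Hj := fun l => Hj l (ltn_ord j).
have HO : dle (\prod_(i < size Zs | i != j) pnorm2 Zs`_i)
              (\sum_(i < size Zs | i != j) (3 ^ i + 3 ^ i))%N.
  apply: dle_prod => i _; apply: dle_pnorm2 => l'; apply: H; rewrite -Hs; exact: ltn_ord.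
have HI : dle (pinner Zs`_j (Mp n)) (3 ^ j + 1)%N by apply: dle_pinner => // l'; apply: dle_Mp.
have := dleM (dleM HO HI) (Hj l).
have := sum3 (size Zs); rewrite (bigD1 j) //= => E.
move=> D; eapply dle_mon; [exact D|]; rewrite -Hs; move: E; set S := (\sum_(i < size Zs | i != j) _)%N; set T := (3 ^ j)%N; set U := (3 ^ size Zs)%N; clearbody S T U; lia.
Qed.

Lemma zlist_poly n : exists Zs : seq PV, size Zs = n /\
  (forall j l, (j < n)%N -> dle (Zs`_j l 0) (3 ^ j)) /\
  forall th, zlist A B th n = map (ev th) Zs.
Proof.
elim: n => [|n [Zs [Hs [Hd He]]]]; first by exists [::].
exists (rcons Zs (pz Zs (Mp n))); split; first by rewrite size_rcons Hs.
split.
  move=> j l jn; rewrite nth_rcons Hs.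
  case: ltnP => [jn'|jn']; first exact: Hd.
  have -> : j = n by lia.
  by rewrite eqxx; apply: dle_pz.
move=> th /=; rewrite He map_rcons pzE MpE. 
reflexivity.
Qed.

End Aux.

Arguments dle {R}.
Arguments ev {R N}.
Arguments pinner {R N}.
Arguments pnorm2 {R N}.
Arguments Mp {R N}.
Arguments pz {R N}.
Arguments dle_pnorm2 {R N}.
Arguments dle_pz {R N A B}.
Arguments pinnerE {R N}.
Arguments pzE {R N}.
Arguments MpE {R N}.

(* 0-based: k : 'I_N corresponds to paper's index k+1, so D = 3^k - 1. *)
Theorem corollary6 (R : realType) (N : nat) (A B : 'M[R[i]]_N) (k : 'I_N) :
  (exists q : {poly R[i]}, (size q <= 3 ^ k)%N /\
     forall th : R, zvec A B th k = q.[th%:C] *: vvec A B th k) /\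
  (forall l : 'I_N, exists p : {poly R[i]}, (size p <= (3 ^ k).+1)%N /\
     forall th : R, zvec A B th k l 0 = p.[th%:C]).
Proof.
have [Zs [Hs [Hd He]]] := @zlist_poly R N A B k.
split.
  exists (\prod_(j < size Zs) pnorm2 Zs`_j); split.
    have HP : dle (\prod_(j < size Zs) pnorm2 Zs`_j) (\sum_(j < size Zs) (3 ^ j + 3 ^ j))%N.
      apply: dle_prod => j _; apply: dle_pnorm2 => l; apply: Hd; rewrite -Hs; exact: ltn_ord.
    by move: HP; rewrite /dle sum3 Hs.
  move=> th; rewrite /zvec /vvec /znew He big_map (big_nth 0) big_mkord horner_prod.
  congr (_ *: _); by apply: eq_bigr => j _; rewrite pinnerE.
move=> l; exists (pz Zs (Mp A B k) l 0); split.
  by apply: dle_pz.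
move=> th; rewrite /zvec He -MpE -pzE mxE //.
Qed.
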